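(* Let $\mathcal N=\{N_1,\ldots,N_\ell\}$ ($\ell\ge4$) be a family of $k$-sets satisfying properties (i) and (ii) below, $m=|V|-k$, and fix any run of the decomposition process described in the context. Then the number of indices $x\in\{1,\dots,\ell\}$ with $|\Gamma_x|\ge m^{1/3}$ (heavy $k$-sets) is at most $3m^{2/3}$.
   Context: Setting: $k\ge3$, $\mathcal N=\{N_1,\dots,N_\ell\}$ a family of $k$-subsets, $V=\bigcup N_i$, $n=|V|$, $m=n-k$, satisfying (i) $\bigcap_{i}N_i=\varnothing$ but $\bigcap_{j\ne i}N_j\ne\varnothing$ for all $i$; (ii) every $S\subseteq V$ with $|S|\ge k+1$ contains a $3$-set $T$ not contained in any $N_i$. Assume $\ell\ge4$. Decomposition process: Stage $0$: $\ell_0=\ell$; for each $i\le\ell_0$ choose $a_i^{(0)}\in\bigcap_{r\ne i}N_r$; kernel $A^{(0)}=\{a_1^{(0)},\dots,a_{\ell_0}^{(0)}\}$. Having defined stages $0,\dots,j$ (with surviving sets $N_1,\dots,N_{\ell_j}$, $\ell_j\ge4$, and kernels $A^{(0)},\dots,A^{(j)}$), consider $R^{(j)}=\{N_r\setminus\bigcup_{s\le j}A^{(s)} : r\le\ell_j\}$, which has empty intersection. If every subfamily of $R^{(j)}$ minimal with respect to having empty intersection has only $2$ or $3$ members, stop and set $t=j$. Otherwise choose such a minimal subfamily with at least $4$ members; after reindexing assume it consists of the truncations $N_r\setminus\bigcup_{s\le j}A^{(s)}$, $r\le\ell_{j+1}$; choose $a_i^{(j+1)}\in\bigcap_{r\le\ell_{j+1},r\ne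 i}\bigl(N_r\setminus\bigcup_{s\le j}A^{(s)}\bigr)$ for $i\le\ell_{j+1}$, and let $A^{(j+1)}$ be the set of these. Let $A=\bigcup_{s\le t}A^{(s)}$ and $G=V\setminus A$. For each $i$ let $t_i=\max\{j: i\le\ell_j\}$. For $g\in G$, $t_g=\max\{t_i: g\in N_i\}$ and $I_g=\{i: g\in N_i,\ t_i=t_g\}$. For $x\in\{1,\dots,\ell\}$, $\Gamma_x=\{g\in G: I_g=\{x\}\}$. *)

(* Defs.v *)
From HB Require Import structures.
From mathcomp Require Import all_boot all_order all_algebra.
Set Implicit Arguments. Unset Strict Implicit. Unset Printing Implicit Defensive.

(* The family N_1,...,N_l is indexed by 'I_l (0-based), sets live in a finType T. *)
Section Decomp.
Variables (T : finType) (l : nat) (N : 'I_l -> {set T}).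

Definition ground : {set T} := \bigcup_(i < l) N i.

Definition prop_i : Prop :=
  \bigcap_(i < l) N i = set0 /\
  forall i : 'I_l, \bigcap_(r < l | r != i) N r != set0.

Definition prop_ii (k : nat) : Prop :=
  forall S : {set T}, S \subset ground -> k.+1 <= #|S| ->
    exists U : {set T}, [/\ U \subset S, #|U| = 3 &
                            forall i : 'I_l, ~~ (U \subset N i)].

(* A run of the decomposition process: t = final stage,
   I j = surviving index set at stage j (I j = {1..l_j} after reindexing),
   a j i = chosen element a_i^{(j)} (for i \in I j). *)
Variables (t : nat) (I : nat -> {set 'I_l}) (a : nat -> 'I_l -> T).

Definition kernel (s : nat) : {set T} := [set a s i | i in I s].
Definition Acum (j : nat) : {set T} := \bigcup_(s < j.+1) kernel s.
Definition trunc (j : nat) (r : 'I_l) : {set T} := N r :\: Acum j.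

Definition minimal_empty (j : nat) (J : {set 'I_l}) : Prop :=
  \bigcap_(r in J) trunc j r = set0 /\
  forall i, i \in J -> \bigcap_(r in J | r != i) trunc j r != set0.

Definition is_run : Prop :=
  [/\ I 0 = setT,
      (forall i : 'I_l, a 0 i \in \bigcap_(r < l | r != i) N r),
      (forall j, j < t ->
         [/\ I j.+1 \subset I j,
             4 <= #|I j.+1|,
             minimal_empty j (I j.+1) &
             forall i, i \in I j.+1 ->
               a j.+1 i \in \bigcap_(r in I j.+1 | r != i) trunc j r]) &
      (forall J : {set 'I_l}, J \subset I t -> minimal_empty t J ->
         2 <= #|J| <= 3)].

Definition A_all : {set T} := Acum t.
Definition Gset : {set T} := ground :\: A_all.

Definition t_idx (i : 'I_l) : nat := \max_(j < t.+1 | i \in I j) j.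
Definition t_elt (g : T) : nat := \max_(i < l | g \in N i) t_idx i.
Definition I_elt (g : T) : {set 'I_l} :=
  [set i | (g \in N i) && (t_idx i == t_elt g)].
Definition Gamma (x : 'I_l) : {set T} := [set g in Gset | I_elt g == [set x]].

End Decomp.

(* Main.v *)
Require Import Defs.
From HB Require Import structures.
From mathcomp Require Import all_boot all_order all_algebra.
From mathcomp Require Import all_classical all_reals all_analysis.
From mathcomp Require Import ring lra.
Import Order.TTheory GRing.Theory Num.Theory.
Set Implicit Arguments. Unset Strict Implicit. Unset Printing Implicit Defensive.
Lemma t_idx_le (l : nat) (t : nat) (I : nat -> {set 'I_l}) i : t_idx t I i <= t.
Proof.
rewrite /t_idx; apply/bigmax_leqP => j _; by rewrite -ltnS.
Qed.

Lemma t_idx_top (l : nat) (t : nat) (I : nat -> {set 'I_l}) i : i \in I t -> t_idx t I i = t.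
Proof.
move=> Hi; apply/eqP; rewrite eqn_leq t_idx_le /=.
rewrite /t_idx; exact: (@leq_bigmax_cond _ _ _ (@ord_max t)).
Qed.

Lemma gamma_out (T : finType) l (N : 'I_l -> {set T}) t (I : nat -> {set 'I_l}) (a : nat -> 'I_l -> T) (x y : 'I_l) g :
  y \in I t -> x != y -> g \in Gamma N t I a x -> g \in ground N :\: N y.
Proof.
move=> Hy Hxy; rewrite /Gamma inE => /andP[HG /eqP HI].
move: HG; rewrite /Gset inE => /andP[_ Hg].
rewrite inE Hg andbT; apply/negP => gy.
have Hte : t_elt N t I g = t.
  apply/eqP; rewrite eqn_leq; apply/andP; split.
    rewrite /t_elt; apply/bigmax_leqP => i _; exact: t_idx_le.
  rewrite -{1}(t_idx_top Hy) /t_elt.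
  exact: (@leq_bigmax_cond _ _ _ y).
have : y \in I_elt N t I g by rewrite /I_elt inE gy /= Hte (t_idx_top Hy).
by rewrite HI inE => /eqP yx; move: Hxy; rewrite yx eqxx.
Qed.

Lemma gamma_uniq (T : finType) l (N : 'I_l -> {set T}) t (I : nat -> {set 'I_l}) (a : nat -> 'I_l -> T) (x x' : 'I_l) g :
  g \in Gamma N t I a x -> g \in Gamma N t I a x' -> x = x'.
Proof.
rewrite /Gamma !inE => /andP[_ /eqP H1] /andP[_ /eqP H2].
by apply/set1_inj; rewrite -H1 -H2.
Qed.

Lemma sum_gamma (T : finType) l (N : 'I_l -> {set T}) t (I : nat -> {set 'I_l}) (a : nat -> 'I_l -> T) (H : {set 'I_l}) (U : {set T}) :
  (forall x, x \in H -> Gamma N t I a x \subset U) ->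
  \sum_(x in H) #|Gamma N t I a x| <= #|U|.
Proof.
move=> HU.
have E : forall x, x \in H -> #|Gamma N t I a x| = \sum_(g in U) (g \in Gamma N t I a x : nat).
  move=> x Hx; rewrite -sum1_card.
  rewrite [RHS](eq_bigr (fun g => if g \in Gamma N t I a x then 1 else 0)); last by move=> g _; case: (g \in _).
  rewrite -big_mkcondr; apply: eq_bigl => g /=.
  case E: (g \in Gamma N t I a x); last by rewrite andbF.
  by rewrite (fintype.subsetP (HU x Hx)).
rewrite (eq_bigr _ E) exchange_big /= -sum1_card; apply: leq_sum => g _.
case: (pickP (fun x => (x \in H) && (g \in Gamma N t I a x))) => [x0 /andP[Hx0 H0]|Hn].
  rewrite (bigD1 x0) //= H0.
  rewrite big1 // => x /andP[_ Hx]; case E': (g \in Gamma N t I a x) => //.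
  by move: Hx; rewrite (gamma_uniq E' H0) eqxx.
by rewrite big1 // => x Hx; move: (Hn x); rewrite Hx /= => ->.
Qed.

Local Open Scope ring_scope.

Theorem lemma12 (R : realType) (T : finType) (k l : nat) (N : 'I_l -> {set T})
  (t : nat) (I : nat -> {set 'I_l}) (a : nat -> 'I_l -> T) :
  (3 <= k)%N -> (4 <= l)%N ->
  (forall i : 'I_l, #|N i| = k) ->
  prop_i N -> prop_ii N k ->
  is_run N t I a ->
  let m := (#|ground N| - k)%N in
  (#|[set x : 'I_l | (m%:R : R) `^ (3^-1) <= (#|Gamma N t I a x|)%:R]|)%:R
    <= 3 * (m%:R : R) `^ (2 / 3).
Proof.
move=> hk hl hN [hcap _] _ [hI0 _ hrun _]; cbv zeta; set m := (#|ground N| - k)%N.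
have sub : forall i, N i \subset ground N.
  by move=> i; rewrite /ground; apply: (finset.bigcup_sup i).
have m1 : (1 <= m)%N.
  rewrite /m subn_gt0 ltnNge; apply/negP => hle.
  have eqN : forall i, N i = ground N.
    by move=> i; apply/eqP; rewrite eqEcard sub /= hN.
  have l0 : (0 < l)%N by apply: leq_trans hl.
  have : (0 < #|N (Ordinal l0)|)%N by rewrite hN; apply: leq_trans hk.
  case/card_gt0P => g hg.
  have : g \in \bigcap_(i < l) N i.
    by apply/finset.bigcapP => i _; rewrite eqN -(eqN (Ordinal l0)).
  by rewrite hcap inE.
have h2 : (1 < #|I t|)%N.
  case: t hrun => [|j] hr.
    by rewrite hI0 cardsT card_ord; apply: leq_trans hl.
  by case: (hr j (ltnSn j)) => _ h4 _ _; apply: leq_trans h4.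
case/card_gt1P: h2 => y1 [y2 [hy1 hy2 hy12]].
set U := (ground N :\: N y1) :|: (ground N :\: N y2).
have cU : (#|U| <= m + m)%N.
  apply: leq_trans (leq_card_setU _ _) _.
  by rewrite !cardsDS ?sub // !hN.
set H := [set x : 'I_l | _].
have hsum : (\sum_(x in H) #|Gamma N t I a x| <= m + m)%N.
  apply: leq_trans cU; apply: sum_gamma => x _; apply/fintype.subsetP => g hg.
  have [e|nx1] := eqVneq y1 x.
    by subst x; rewrite inE (gamma_out hy2 _ hg) ?orbT // eq_sym.
  by rewrite inE (gamma_out hy1 _ hg) // eq_sym.
set c := (m%:R : R) `^ 3^-1.
set d := (m%:R : R) `^ (2 / 3).
have mpos : (0 : R) < m%:R by rewrite ltr0n.
have cpos : 0 < c by apply: powR_gt0.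
have d0 : 0 <= d by apply: powR_ge0.
have mcd : (m%:R : R) = c * d.
  rewrite /c /d -powRD; last by apply/implyP => _; rewrite lt0r_neq0.
  have -> : (3^-1 + 2 / 3 : R) = 1 by field.
  by rewrite powRr1 // ltW.
have key : #|H|%:R * c <= c * (2 * d).
  apply: (@le_trans _ _ (\sum_(x in H) (#|Gamma N t I a x|)%:R)).
    rewrite mulr_natl -sumr_const; apply: ler_sum => x; by rewrite inE.
  rewrite -natr_sum; apply: (@le_trans _ _ (m + m)%:R); first by rewrite ler_nat.
  rewrite natrD mcd; lra.
have : #|H|%:R <= 2 * d.
  by rewrite -(ler_pM2l cpos) mulrC.
move=> h; apply: le_trans h _; lra.
Qed.
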